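(* Let $B$ be an integral domain containing $A$ as a subring, let $f:A\to B$ be $\mathbb{F}_q$-linear, let $d$ be a non-negative integer, and let $\beta$ be a non-negative integer with base-$q$ expansion $\beta=\sum_{i=0}^e\beta_iq^i$ ($0\le\beta_i\le q-1$) such that $l(\beta)<q$. Then, in $\mathrm{Frac}(B)[z]$, $$M_d(f^\beta)(z)=M_d(1)^{1-l(\beta)}\prod_{i=0}^e\left(M_d(f^{q^i})(z)\right)^{\beta_i}.$$
   Context: $q$ is a power of a prime, $A=\mathbb{F}_q[\theta]$, $A_+(d)$ is the set of monic polynomials of degree $d$ in $A$. For a function $g:A\to B$, $M_d(g)(z):=\sum_{b\in A_+(d)} g(b)\prod_{a\in A_+(d)\setminus\{b\}}(z-a)\in B[z]$; $f^{m}$ denotes the function $a\mapsto f(a)^m$ (with $f^0=1$). $M_d(1)$ denotes $M_d$ applied to the constant function $1$; it is the nonzero constant $(-1)^dD_d/L_d\in A$, where $D_d$ is the product of all monic polynomials of degree $d$ and $L_d$ the lcm of all polynomials of degree $d$. $l(\beta):=\sum_i\beta_i$ is the sum of base-$q$ digits. *)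

(* Defs.v *)
From HB Require Import structures.
From mathcomp Require Import all_boot all_order all_algebra all_field.
Set Implicit Arguments. Unset Strict Implicit. Unset Printing Implicit Defensive.
Import GRing.Theory.
Local Open Scope ring_scope.

(* A = F[theta] is modelled as {poly F} for F : finFieldType, q = #|F|. *)

Definition monics (F : finFieldType) (d : nat) : seq {poly F} :=
  [seq 'X^d + \sum_(i < d) (c i)%:P * 'X^i | c : {ffun 'I_d -> F}].

Definition Md (F : finFieldType) (R : comRingType) (iota : {poly F} -> R)
    (d : nat) (g : {poly F} -> R) : {poly R} :=
  \sum_(b <- monics F d)
     g b *: \prod_(a <- monics F d | a != b) ('X - (iota a)%:P).

(* i-th base-q digit of beta, and the base-q digit sum l(beta). Digits with
   index > beta vanish (q >= 2), so indices i < beta.+1 cover the expansion. *)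
Definition digit (q beta i : nat) : nat := (beta %/ q ^ i) %% q.
Definition lsum (q beta : nat) : nat := \sum_(i < beta.+1) digit q beta i.

(* Main.v *)
Require Import Defs.
From HB Require Import structures.
From mathcomp Require Import all_boot all_order all_algebra all_field.
Import GRing.Theory.
Local Open Scope ring_scope.
From mathcomp Require Import all_fingroup all_solvable zify.
Set Implicit Arguments. Unset Strict Implicit. Unset Printing Implicit Defensive.
Import GRing.Theory.
Local Open Scope ring_scope.

Section Basic.
Variables (F : finFieldType) (d : nat).
Local Notation T := {ffun 'I_d -> F}.
Definition mon (c : T) : {poly F} := 'X^d + \sum_(i < d) (c i)%:P * 'X^i.
Definition lin (c : T) : {poly F} := \sum_(i < d) (c i)%:P * 'X^i.

Lemma monicsE : monics F d = map mon (enum T).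
Proof. by []. Qed.

Lemma coef_lin (c : T) (i : 'I_d) : (lin c)`_i = c i.
Proof.
rewrite /lin coef_sum (bigD1 i) //= coefCM coefXn eqxx mulr1 big1 ?addr0 //.
by move=> j ji; rewrite coefCM coefXn; case: eqP => [/val_inj h|]; rewrite ?mulr0 //; rewrite h eqxx in ji.
Qed.

Lemma coef_mon (c : T) (i : 'I_d) : (mon c)`_i = c i.
Proof. by rewrite coefD coefXn ltn_eqF //= add0r coef_lin. Qed.

Lemma mon_inj : injective mon.
Proof. by move=> c c' e; apply/ffunP => i; rewrite -!coef_mon e. Qed.

Lemma lin_add (c c' : T) : lin (c - c') = lin c - lin c'.
Proof.
rewrite /lin -sumrB; apply: eq_bigr => i _.
by rewrite !ffunE rmorphB /= mulrBl.
Qed.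

Lemma mon_sub (c c' : T) : mon c - mon c' = lin (c - c').
Proof. by rewrite lin_add /mon opprD addrACA subrr add0r. Qed.

Lemma uniq_monics : uniq (monics F d).
Proof. by rewrite monicsE map_inj_uniq ?enum_uniq //; apply: mon_inj. Qed.

Lemma size_monics : size (monics F d) = (#|F| ^ d)%N.
Proof. by rewrite monicsE size_map -cardE card_ffun card_ord. Qed.

End Basic.

Section KWorld.
Variables (F : finFieldType) (d : nat) (K : fieldType).
Variables (io : {rmorphism {poly F} -> K}) (io_inj : injective io).
Local Notation T := {ffun 'I_d -> F}.
Local Notation S := (monics F d).
Local Notation N := (#|F| ^ d)%N.

Definition kap (b : {poly F}) := \prod_(a <- S | a != b) (io b - io a).

Lemma Md_eval g b : b \in S -> (Md io d g).[io b] = g b * kap b.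
Proof.
move=> bS; rewrite /Md horner_sum (bigD1_seq b) ?uniq_monics //= [X in _ + X]big1 ?addr0.
  by rewrite hornerZ horner_prod; congr (_ * _); apply: eq_bigr => a _; rewrite hornerXsubC.
move=> b' nb'; rewrite hornerZ horner_prod big_mkcond (bigD1_seq b) ?uniq_monics //=.
by rewrite eq_sym nb' hornerXsubC subrr mul0r mulr0.
Qed.

Lemma Md_size g : (size (Md io d g) <= N)%N.
Proof.
rewrite /Md; apply: (leq_trans (size_sum _ _ _)); apply/bigmax_leqP_seq => b bS _.
apply: (leq_trans (size_scale_leq _ _)).
rewrite -big_filter size_prod_XsubC size_filter -size_monics.
have: (0 < count (pred1 b) S)%N by rewrite -has_count has_pred1.
rewrite -(count_predC (pred1 b) S) /=.
have ->: count (fun i : {poly F} => i != b) S = count (predC (pred1 b)) S by [].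
by move=> h; rewrite -add1n leq_add2r.
Qed.

Lemma Md_uniq (p r : {poly K}) : (size p <= N)%N -> (size r <= N)%N ->
  (forall b, b \in S -> p.[io b] = r.[io b]) -> p = r.
Proof.
move=> sp sr e; apply/eqP; rewrite -subr_eq0; apply/negPn/negP => nz.
have := max_poly_roots nz (rs := map io S).
rewrite size_map size_monics map_inj_uniq ?uniq_monics //.
have -> : all (root (p - r)) (map io S).
  by apply/allP => x /mapP [b bS ->]; rewrite rootE hornerD hornerN e // subrr.
move=> /(_ isT isT); apply/negP; rewrite -leqNgt.
by apply: (leq_trans (size_polyD _ _)); rewrite geq_max size_polyN sp sr.
Qed.

Definition kap0 := \prod_(c : T | c != 0) io (lin c).

Lemma kap_const b : b \in S -> kap b = kap0.
Proof.
rewrite monicsE => /mapP [c0 _ ->].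
rewrite /kap big_map big_enum_cond /kap0 (reindex_inj (subrI c0)) /=.
apply: eq_big => c.
  rewrite -/(mon (c0 - c)) (inj_eq (@mon_inj _ _)).
  by apply/negb_inj; rewrite !negbK -subr_eq0 addrAC subrr add0r oppr_eq0.
by move=> _; rewrite -/(mon (c0 - c)) -rmorphB mon_sub opprB addrC subrK.
Qed.

Lemma kap0_neq0 : kap0 != 0.
Proof.
apply/prodf_neq0 => c nc; rewrite -(rmorph0 io) (inj_eq io_inj).
apply: contra nc => /eqP lc; apply/eqP/ffunP => i.
by rewrite -coef_lin lc coef0 ffunE.
Qed.

End KWorld.

Section Frob.
Variables (F : finFieldType) (K : fieldType) (io : {rmorphism {poly F} -> K}).
Local Notation q := #|F|.

Lemma pchar_nat : [pchar K].-nat q.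
Proof.
have [p pr pF] := finPcharP F.
have pK : p \in [pchar K] by apply: (rmorph_pchar io); apply: (rmorph_pchar (@polyC F)).
have := abelem_pgroup (fin_ring_pchar_abelem pF).
rewrite /pgroup cardsT => h.
by rewrite (eq_pnat _ (pcharf_eq pK)).
Qed.

Lemma frobD i (x y : K) : (x + y) ^+ (q ^ i) = x ^+ (q ^ i) + y ^+ (q ^ i).
Proof. by apply: exprDn_pchar; rewrite pnatX pchar_nat. Qed.

Lemma frob_const i (c : F) : io c%:P ^+ (q ^ i) = io c%:P.
Proof.
rewrite -rmorphXn -polyC_exp; congr (io _%:P).
elim: i => [|i IH]; first by rewrite expr1.
by rewrite expnS exprM expf_card IH.
Qed.

Definition is_lin (h : {poly F} -> K) :=
  forall (c : F) (a b : {poly F}), h (c *: a + b) = io c%:P * h a + h b.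

Lemma lin_pow h i : is_lin h -> is_lin (fun a => h a ^+ (q ^ i)).
Proof. by move=> hl c a b /=; rewrite hl frobD exprMn frob_const. Qed.

Lemma io_lin : is_lin io.
Proof. by move=> c a b; rewrite rmorphD -mul_polyC rmorphM. Qed.

Lemma lin_affine h (d : nat) : is_lin h -> forall c : {ffun 'I_d -> F},
  h (mon c) = h 'X^d + \sum_(k < d) io (c k)%:P * h 'X^k.
Proof.
move=> hl c.
have h0 : h 0 = 0.
  have := hl 1 0 0; rewrite scaler0 addr0 polyC1 rmorph1 mul1r => e.
  by apply: (addrI (h 0)); rewrite addr0 -e.
have hD a b : h (a + b) = h a + h b by rewrite -[a]scale1r hl polyC1 rmorph1 mul1r scale1r.
have hS (s : seq 'I_d) (G : 'I_d -> {poly F}) : h (\sum_(k <- s) G k) = \sum_(k <- s) h (G k).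
  elim: s => [|x s IH]; first by rewrite !big_nil h0.
  by rewrite !big_cons hD IH.
rewrite /mon hD hS; congr (_ + _); apply: eq_bigr => k _.
by rewrite mul_polyC -[_ *: _]addr0 hl h0 addr0.
Qed.

End Frob.

Section Interp.
Variables (F : finFieldType) (d : nat) (K : fieldType).
Variables (io : {rmorphism {poly F} -> K}) (io_inj : injective io).
Local Notation T := {ffun 'I_d -> F}.
Local Notation S := (monics F d).
Local Notation q := #|F|.
Local Notation N := (#|F| ^ d)%N.
Local Notation e := (q ^ d %/ q)%N.

Lemma q_gt1 : (1 < q)%N. Proof. exact: finNzRing_gt1. Qed.

Lemma e_le : (e.+1 <= N)%N.
Proof.
have q1 := q_gt1; case: d => [|d']; first by rewrite expn0 divn_small.
rewrite expnS mulKn ?(ltnW q1) //.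
have : (0 < q ^ d')%N by rewrite expn_gt0 ltnW.
move: (q ^ d')%N => x x0.
nia.
Qed.

Lemma le_bnd l : (l < q)%N -> ((l * e).+1 <= N)%N.
Proof.
move=> lq; have q1 := q_gt1; case: d => [|d']; first by rewrite expn0 divn_small // muln0.
rewrite expnS mulKn ?(ltnW q1) //.
have : (0 < q ^ d')%N by rewrite expn_gt0 ltnW.
move: (q ^ d')%N => x x0.
nia.
Qed.

Lemma qj_le j : (j < d)%N -> (q ^ j <= e)%N.
Proof.
move=> jd; have q1 := q_gt1.
rewrite -(mulnK (q ^ j) (ltnW q1)) -expnSr leq_div2r // leq_pexp2l ?(ltnW q1) //.
Qed.

Definition Pk (k : 'I_d.+1) : {poly K} :=
  if unlift ord0 k is Some j then 'X^(q ^ j) else 1.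

Definition comb (u : 'rV[K]_d.+1) := \sum_k u 0 k *: Pk k.

Lemma size_comb u : (size (comb u) <= e.+1)%N.
Proof.
rewrite /comb; elim/big_rec: _ => [|k p _ IH]; first by rewrite size_poly0.
apply: (leq_trans (size_polyD _ _)); rewrite geq_max IH andbT.
apply: (leq_trans (size_scale_leq _ _)); rewrite /Pk.
case: (unliftP ord0 k) => [j _|_]; last by rewrite size_poly1.
by rewrite size_polyXn ltnS qj_le.
Qed.

Lemma combE u : comb u = u 0 ord0 *: 1 + \sum_(j < d) u 0 (lift ord0 j) *: 'X^(q ^ j).
Proof.
rewrite /comb big_ord_recl /Pk unlift_none; congr (_ + _).
by apply: eq_bigr => j _; rewrite liftK.
Qed.

Local Notation n := #|T|.
Definition pt (i : 'I_n) := io (mon (enum_val i)).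
Definition M1 : 'M[K]_(d.+1, n) := \matrix_(k, i) (Pk k).[pt i].

Lemma M1_mul (u : 'rV[K]_d.+1) i : (u *m M1) 0 i = (comb u).[pt i].
Proof.
rewrite !mxE /comb horner_sum; apply: eq_bigr => k _.
by rewrite mxE hornerZ.
Qed.

Lemma comb_zero (u : 'rV[K]_d.+1) : u *m M1 = 0 -> u = 0.
Proof.
move=> Hu.
have R0 : comb u = 0.
  apply: (@Md_uniq F d K io io_inj).
  - exact: leq_trans (size_comb u) e_le.
  - by rewrite size_poly0.
  move=> b; rewrite monicsE => /mapP [c _ ->].
  by rewrite horner0 -(enum_rankK c) -/(pt _) -M1_mul Hu mxE.
have qgt0 j : (q ^ j != 0)%N by rewrite -lt0n expn_gt0 ltnW // q_gt1.
apply/rowP => k; rewrite mxE.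
rewrite combE in R0.
case: (unliftP ord0 k) => [j ->|->].
- have := congr1 (fun p : {poly K} => p`_(q ^ j)) R0.
  rewrite coef0 coefD coefZ coef1 (negbTE (qgt0 j)) mulr0 add0r coef_sum (bigD1 j) //=.
  rewrite coefZ coefXn eqxx mulr1 big1 ?addr0 // => j' nj.
  rewrite coefZ coefXn; case: eqP => [/(expnI q_gt1)/val_inj h|]; last by rewrite mulr0.
  by rewrite h eqxx in nj.
- have := congr1 (fun p : {poly K} => p`_0) R0.
  rewrite coef0 coefD coefZ coef1 eqxx mulr1 coef_sum big1 ?addr0 // => j _.
  by rewrite coefZ coefXn eq_sym (negbTE (qgt0 j)) mulr0.
Qed.

Lemma M1_free : row_free M1.
Proof.
rewrite -kermx_eq0; apply/eqP/row_matrixP => r; rewrite row0.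
apply: comb_zero; by rewrite -row_mul mulmx_ker row0.
Qed.

Definition cd (k : 'I_d.+1) (c : T) : K :=
  if unlift ord0 k is Some j then io (c j)%:P else 1.
Definition M2 : 'M[K]_(d.+1, n) := \matrix_(k, i) cd k (enum_val i).

Definition Dm : 'M[K]_(d.+1, d.+1) := \matrix_(k, l)
  match unlift ord0 k with
  | None => if unlift ord0 l is Some _ then 0 else 1
  | Some j => match unlift ord0 l with
              | None => io 'X^d ^+ (q ^ j)
              | Some l' => io 'X^l' ^+ (q ^ j) end end.

Lemma M1_sub : (M1 <= M2)%MS.
Proof.
apply/submxP; exists Dm; apply/matrixP => k i; rewrite !mxE big_ord_recl.
rewrite !mxE /cd /Pk unlift_none /=.
case: (unliftP ord0 k) => [j ->|->].
- rewrite hornerXn /pt mulr1.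
  rewrite (lin_affine (lin_pow j (io_lin io))); congr (_ + _).
  by apply: eq_bigr => l _; rewrite !mxE !liftK mulrC /cd liftK.
- rewrite -polyC1 hornerC mulr1 big1 ?addr0 // => l _.
  by rewrite !mxE unlift_none liftK mul0r.
Qed.

Lemma M2_sub : (M2 <= M1)%MS.
Proof.
have h := mxrank_leqif_sup M1_sub.
rewrite -h.2 eqn_leq h.1 /=.
by rewrite (eqP M1_free) rank_leq_row.
Qed.

Lemma interp (h0 : K) (hk : 'I_d -> K) : exists Q : {poly K},
  (size Q <= e.+1)%N /\
  forall c : T, Q.[io (mon c)] = h0 + \sum_(k < d) io (c k)%:P * hk k.
Proof.
pose hrow : 'rV[K]_n := \row_i (h0 + \sum_(k < d) io ((enum_val i : T) k)%:P * hk k).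
pose u2 : 'rV[K]_d.+1 := \row_l (if unlift ord0 l is Some k then hk k else h0).
have E : hrow = u2 *m M2.
  apply/rowP => i; rewrite !mxE big_ord_recl !mxE /cd unlift_none mulr1.
  congr (_ + _); apply: eq_bigr => k _; rewrite !mxE !liftK mulrC.
  by rewrite /cd liftK.
have : (hrow <= M1)%MS by rewrite E (submx_trans (submxMl _ _) M2_sub).
case/submxP => v Hv.
exists (comb v); split; first exact: size_comb.
move=> c; rewrite -(enum_rankK c) -/(pt _) -M1_mul -Hv mxE.
by [].
Qed.

End Interp.
Local Open Scope nat_scope.

Lemma digits_sum q b n : 0 < q ->
  \sum_(i < n) digit q b i * q ^ i = b %% q ^ n.
Proof.
move=> q0; elim: n => [|n IH]; first by rewrite big_ord0 expn0 modn1.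
rewrite big_ord_recr /= IH /digit.
set x := b %/ q ^ n.
have e1 : b = x * q ^ n + b %% q ^ n by rewrite /x -divn_eq.
have e2 : x = x %/ q * q + x %% q by rewrite -divn_eq.
have h1 : b %% q ^ n < q ^ n by rewrite ltn_mod expn_gt0 q0.
have h2 : x %% q < q by rewrite ltn_mod.
have e3 : b = x %/ q * q ^ n.+1 + (b %% q ^ n + x %% q * q ^ n).
  rewrite expnS {1}e1 {1}e2; nia.
rewrite [in RHS]e3 modnMDl; apply/esym/modn_small; rewrite expnS.
have : x %% q <= q.-1 by rewrite -ltnS prednK.
move: (x %% q) (b %% q ^ n) (q ^ n) h1 => a r Q hr ha.
nia.
Qed.

Lemma digits_full q b : 1 < q -> \sum_(i < b.+1) digit q b i * q ^ i = b.
Proof.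
move=> q1; rewrite digits_sum ?(ltnW q1) // modn_small //.
apply: (leq_trans (ltn_expl b q1)); rewrite leq_exp2l //.
Qed.
Local Open Scope ring_scope.

Lemma eq_Md (F : finFieldType) (R : comNzRingType) (io : {poly F} -> R) d g g' :
  (forall a, g a = g' a) -> Md io d g = Md io d g'.
Proof. by move=> e; apply: eq_bigr => b _; rewrite e. Qed.

Section Main.
Variables (F : finFieldType) (d : nat) (K : fieldType).
Variables (io : {rmorphism {poly F} -> K}) (io_inj : injective io).
Local Notation S := (monics F d).
Local Notation q := #|F|.
Local Notation N := (#|F| ^ d)%N.
Local Notation e := (q ^ d %/ q)%N.
Local Notation k0 := (kap0 d io).

Lemma Md_small g : is_lin io g -> (size (Md io d g) <= e.+1)%N.
Proof.
move=> gl; have [Q [sQ hQ]] := @interp F d K io io_inj (g 'X^d) (fun k => g 'X^k).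
suff -> : Md io d g = k0 *: Q by apply: leq_trans (size_scale_leq _ _) sQ.
apply: (@Md_uniq F d K io io_inj); first exact: Md_size.
  exact: leq_trans (size_scale_leq _ _) (leq_trans sQ (e_le F d)).
move=> b bS; rewrite Md_eval // (kap_const io bS) hornerZ mulrC.
move: bS; rewrite monicsE => /mapP [c _ ->].
by rewrite hQ (lin_affine gl).
Qed.

Lemma Md1 : Md io d (fun _ => 1) = k0%:P.
Proof.
apply: (@Md_uniq F d K io io_inj); first exact: Md_size.
  by apply: leq_trans (size_polyC_leq1 _) _; rewrite expn_gt0 ltnW // q_gt1.
by move=> b bS; rewrite Md_eval // (kap_const io bS) hornerC mul1r.
Qed.

Lemma size_prodX m (p : 'I_m -> {poly K}) (k : 'I_m -> nat) :
  (forall i, size (p i) <= e.+1)%N ->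
  (size (\prod_(i < m) p i ^+ k i)%R <= (\sum_(i < m) k i * e).+1)%N.
Proof.
elim: m p k => [|m IH] p k hp; first by rewrite !big_ord0 size_poly1.
rewrite !big_ord_recr /=.
have := IH (fun i => p (widen_ord (leqnSn m) i)) (fun i => k (widen_ord (leqnSn m) i)) (fun i => hp _).
set r := \prod_(i < m) _; set s := \sum_(i < m) _ => IH'.
apply: (leq_trans (size_polyMleq _ _)).
have := size_poly_exp_leq (p ord_max) (k ord_max); have := hp ord_max.
move: (size (p ord_max)) (size (p ord_max ^+ k ord_max)) (size r) IH' => a b c IH' ha hb.
move: (k ord_max) (#|F| ^ d %/ #|F|)%N hb ha => kk ee hb ha. nia.
Qed.

Variables (f : {poly F} -> K) (fl : is_lin io f).

Lemma main_K beta : (lsum q beta < q)%N ->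
  Md io d (fun a => f a ^+ beta) =
    (Md io d (fun _ => 1)) ^ (1 - (lsum q beta)%:Z)
    * \prod_(i < beta.+1) (Md io d (fun a => f a ^+ (q ^ i))) ^+ digit q beta i.
Proof.
move=> hl; set l := lsum q beta.
set P := \prod_(i < beta.+1) _.
have k0n : k0 != 0 := kap0_neq0 d io_inj.
have key : k0 ^+ l *: Md io d (fun a => f a ^+ beta) = k0 *: P.
  apply: (@Md_uniq F d K io io_inj).
  - exact: leq_trans (size_scale_leq _ _) (Md_size _ _ _).
  - apply: leq_trans (size_scale_leq _ _) _.
    apply: leq_trans (size_prodX _ (fun i => Md_small (lin_pow i fl))) _.
    by rewrite -big_distrl /=; exact: (@le_bnd F d _ hl).
  move=> b bS.
  rewrite !hornerZ Md_eval // (kap_const io bS) horner_prod.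
  under eq_bigr => i _ do rewrite horner_exp Md_eval // (kap_const io bS) exprMn.
  rewrite big_split /= prodrXr -/l.
  under eq_bigr => i _ do rewrite -exprM.
  rewrite prodrXr (eq_bigr (fun i : 'I_beta.+1 => (digit q beta i * q ^ i)%N)).
    rewrite digits_full ?q_gt1 // -/l.
    by rewrite [in LHS]mulrC -mulrA [in RHS]mulrCA.
  by move=> i _; rewrite mulnC.
rewrite Md1 -rmorphXz ?unitfE // mul_polyC expfzDr ?expr1z // -invr_expz.
apply: (scalerI (expf_neq0 l k0n)).
rewrite key scalerA mulrCA mulrA.
by rewrite -mulrA (_ : k0 ^ (l%:Z) = k0 ^+ l) // mulfV ?mulr1 // expf_neq0.
Qed.

End Main.
Unset Implicit Arguments. Set Strict Implicit. Set Printing Implicit Defensive.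

Lemma map_Md (F : finFieldType) (B : idomainType)
  (iota : {rmorphism {poly F} -> B}) d (g : {poly F} -> B) :
  map_poly (@tofrac B) (Md iota d g) =
  Md (@tofrac B \o iota : {rmorphism {poly F} -> {fraction B}}) d (fun a => tofrac (g a)).
Proof.
rewrite /Md rmorph_sum; apply: eq_bigr => b _.
rewrite /= map_polyZ rmorph_prod; congr (_ *: _); apply: eq_bigr => a _.
by rewrite /= map_polyXsubC.
Qed.

Theorem corollary4p1p14 (F : finFieldType) (B : idomainType)
  (iota : {rmorphism {poly F} -> B}) (iota_inj : injective iota)
  (f : {poly F} -> B)
  (f_lin : forall (c : F) (a b : {poly F}), f (c *: a + b) = iota c%:P * f a + f b)
  (d beta : nat) (hl : (lsum #|F| beta < #|F|)%N) :
  map_poly (@tofrac B) (Md iota d (fun a => f a ^+ beta)) =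
    (map_poly (@tofrac B) (Md iota d (fun _ => 1))) ^ (1 - (lsum #|F| beta)%:Z)
    * \prod_(i < beta.+1)
        (map_poly (@tofrac B) (Md iota d (fun a => f a ^+ (#|F| ^ i))))
          ^+ digit #|F| beta i.
Proof.
pose io : {rmorphism {poly F} -> {fraction B}} := @tofrac B \o iota.
have io_inj : injective io.
  by move=> x y /eqP; rewrite /io /= tofrac_eq => /eqP /iota_inj.
pose fK a := tofrac (f a).
have fl : is_lin io fK.
  by move=> c a b; rewrite /fK f_lin rmorphD rmorphM.
rewrite !map_Md -/io.
rewrite (eq_Md _ _ (g' := fun a => fK a ^+ beta)); last by move=> a; rewrite rmorphXn.
rewrite (eq_Md _ _ (g := fun _ => tofrac 1) (g' := fun _ => 1)); last by move=> a; rewrite rmorph1.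
rewrite (main_K d io_inj fl hl); congr (_ * _); apply: eq_bigr => i _.
by rewrite map_Md (eq_Md _ _ (g' := fun a => fK a ^+ (#|F| ^ i))) // => a; rewrite rmorphXn.
Qed.
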